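(* Let $X$ be a Polish space with a fixed compatible metric $d$, $h:X\to\mathbb R$, and let $\alpha,\xi,\zeta$ be countable ordinals. If $P$ is a closed set in $X$ having property $(\xi,\zeta)$ with respect to $h$, then $D^\alpha(h,1,P)$ has property $(\xi,\zeta+\alpha)$ with respect to $h$.
   Context: $B(x,\varepsilon)$ is the open $d$-ball. $D$-derivation: for $f$ defined on a closed set containing $F$, $\varepsilon>0$, closed $F$: $D^0(f,\varepsilon,F)=F$, $D^1(f,\varepsilon,F)$ = set of $x\in F$ such that every neighbourhood $U$ of $x$ contains $x_1,x_2\in F\cap U$ with $|f(x_1)-f(x_2)|\ge\varepsilon$, $D^{\alpha+1}=D^1(f,\varepsilon,D^\alpha(f,\varepsilon,F))$, intersections at limits. A closed set $P$ has property $(\xi,\zeta)$ with respect to $h$ if for every $x\in P$ and every $\varepsilon>0$ there are a closed set $Q\subseteq B(x,\varepsilon)$ and a function $g:Q\to\mathbb N$ such that $g=1$ on $D^\xi(g,1,Q)\cup\{x\}$ and $x\in D^\zeta(gh,1,Q)$. *)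

(* Defs.v *)
From Stdlib Require Import Reals.
Open Scope R_scope.



Definition is_metric {X : Type} (d : X -> X -> R) : Prop :=
  (forall x y, 0 <= d x y) /\
  (forall x y, d x y = 0 <-> x = y) /\
  (forall x y, d x y = d y x) /\
  (forall x y z, d x z <= d x y + d y z).

Definition cauchy_seq {X : Type} (d : X -> X -> R) (u : nat -> X) : Prop :=
  forall eps, eps > 0 -> exists N, forall m n, (N <= m)%nat -> (N <= n)%nat ->
    d (u m) (u n) < eps.

Definition converges_to {X : Type} (d : X -> X -> R) (u : nat -> X) (l : X) : Prop :=
  forall eps, eps > 0 -> exists N, forall n, (N <= n)%nat -> d (u n) l < eps.

Definition complete_metric {X : Type} (d : X -> X -> R) : Prop :=
  forall u, cauchy_seq d u -> exists l, converges_to d u l.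

Definition separable_metric {X : Type} (d : X -> X -> R) : Prop :=
  exists C : X -> Prop,
    (exists e : X -> nat, forall x y, C x -> C y -> e x = e y -> x = y) /\
    (forall x eps, eps > 0 -> exists c, C c /\ d x c < eps).

Definition polish_metric {X : Type} (d : X -> X -> R) : Prop :=
  is_metric d /\ complete_metric d /\ separable_metric d.

Definition ball {X : Type} (d : X -> X -> R) (x : X) (eps : R) : X -> Prop :=
  fun y => d x y < eps.

Definition nbhd {X : Type} (d : X -> X -> R) (x : X) (U : X -> Prop) : Prop :=
  exists delta, delta > 0 /\ forall y, ball d x delta y -> U y.

Definition mclosed {X : Type} (d : X -> X -> R) (F : X -> Prop) : Prop :=
  forall x, (forall delta, delta > 0 -> exists y, F y /\ d x y < delta) -> F x.

(** Countable ordinals, represented as Brouwer trees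
    (zero, successor, supremum of an omega-sequence). *)
Inductive ord : Type :=
| OZ : ord
| OS : ord -> ord
| OL : (nat -> ord) -> ord.

Fixpoint oadd (a b : ord) : ord :=
  match b with
  | OZ => a
  | OS b' => OS (oadd a b')
  | OL f => OL (fun n => oadd a (f n))
  end.

(** One step of the D-derivation. Functions are total on X; only their
    values on F matter. *)
Definition D1 {X : Type} (d : X -> X -> R) (f : X -> R) (eps : R)
    (F : X -> Prop) : X -> Prop :=
  fun x => F x /\
    forall U, nbhd d x U ->
      exists x1 x2, F x1 /\ U x1 /\ F x2 /\ U x2 /\ Rabs (f x1 - f x2) >= eps.

Fixpoint Dalpha {X : Type} (d : X -> X -> R) (f : X -> R) (eps : R)
    (F : X -> Prop) (a : ord) : X -> Prop :=
  match a with
  | OZ => F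
  | OS b => D1 d f eps (Dalpha d f eps F b)
  | OL g => fun x => forall n, Dalpha d f eps F (g n) x
  end.

(** Property (xi,zeta) with respect to h. g : Q -> N is modelled by a
    total g : X -> nat; gh is the pointwise product. *)
Definition has_property {X : Type} (d : X -> X -> R) (h : X -> R)
    (P : X -> Prop) (xi zeta : ord) : Prop :=
  forall x, P x -> forall eps, eps > 0 ->
    exists (Q : X -> Prop) (g : X -> nat),
      mclosed d Q /\
      (forall y, Q y -> ball d x eps y) /\
      (forall y, Dalpha d (fun z => INR (g z)) 1 Q xi y \/ y = x -> g y = 1%nat) /\
      Dalpha d (fun z => INR (g z) * h z) 1 Q zeta x.

(* Main.v *)
Require Import Defs.
From Stdlib Require Import Reals.
From Stdlib Require Import Lra Lia Wellfounded Relations Classical ClassicalEpsilon.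
Open Scope R_scope.

Lemma D_sub {X} (d : X -> X -> R) f e F a : forall x, Dalpha d f e F a x -> F x.
Proof.
  induction a as [|b IH|g IH]; simpl; intros x Hx.
  - exact Hx.
  - apply IH. exact (proj1 Hx).
  - apply (IH 0%nat). apply Hx.
Qed.

Lemma D_mono {X} (d : X -> X -> R) f e (F G : X -> Prop) (HFG : forall z, F z -> G z) a :
  forall x, Dalpha d f e F a x -> Dalpha d f e G a x.
Proof.
  induction a as [|b IH|g IH]; simpl; intros x Hx.
  - auto.
  - destruct Hx as [H1 H2]. split; [auto|].
    intros U HU. destruct (H2 U HU) as (x1 & x2 & A1 & B1 & A2 & B2 & C).
    exists x1, x2; repeat split; auto.
  - intro n. apply IH. apply Hx.
Qed.

Lemma D_ext {X} (d : X -> X -> R) f f' e (F : X -> Prop) (Hf : forall z, F z -> f z = f' z) a :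
  forall x, Dalpha d f e F a x -> Dalpha d f' e F a x.
Proof.
  induction a as [|b IH|g IH]; simpl; intros x Hx.
  - auto.
  - destruct Hx as [H1 H2]. split; [auto|].
    intros U HU. destruct (H2 U HU) as (x1 & x2 & A1 & B1 & A2 & B2 & C).
    exists x1, x2; repeat split; auto.
    rewrite <- (Hf x1), <- (Hf x2); auto; eapply D_sub; eauto.
  - intro n. apply IH. apply Hx.
Qed.

Lemma D_local {X} (d : X -> X -> R) (Hm : is_metric d) f e (F A : X -> Prop)
  (HAF : forall z, A z -> F z)
  (Hop : forall y, A y -> exists delta, delta > 0 /\ forall w, F w -> d y w < delta -> A w) a :
  forall y, A y -> Dalpha d f e F a y -> Dalpha d f e A a y.
Proof.
  induction a as [|b IH|g IH]; simpl; intros y Ay Hy.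
  - auto.
  - destruct Hy as [H1 H2]. split; [auto|].
    intros U [d0 [Hd0 HU]].
    destruct (Hop y Ay) as [de [Hde Hw]].
    destruct (H2 (fun z => U z /\ d y z < de)) as (x1 & x2 & A1 & [B1 B1'] & A2 & [B2 B2'] & C).
    { exists (Rmin d0 de). split. apply Rmin_glb_lt; lra.
      intros z Hz. unfold ball in Hz. split.
      apply HU. unfold ball. pose proof (Rmin_l d0 de). lra.
      pose proof (Rmin_r d0 de). lra. }
    assert (A x1) by (apply Hw; auto; eapply D_sub; eauto).
    assert (A x2) by (apply Hw; auto; eapply D_sub; eauto).
    exists x1, x2; repeat split; auto.
  - intro n. apply IH; auto.
Qed.

Lemma D_closure {X} (d : X -> X -> R) (Hm : is_metric d) f e (F : X -> Prop)
  (HF : mclosed d F) a :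
  forall y, (forall delta, delta > 0 -> exists z, Dalpha d f e F a z /\ d y z < delta) ->
  Dalpha d f e F a y.
Proof.
  destruct Hm as (Hnn & H0 & Hsym & Htr).
  induction a as [|b IH|g IH]; simpl; intros y Hy.
  - apply HF. intros de Hde. destruct (Hy de Hde) as [z [Hz Hz']]. eauto.
  - split.
    + apply IH. intros de Hde. destruct (Hy de Hde) as [z [Hz Hz']].
      exists z. split; auto. exact (proj1 Hz).
    + intros U [d0 [Hd0 HU]].
      destruct (Hy d0 Hd0) as [z [[Hz1 Hz2] Hz']].
      apply Hz2. exists (d0 - d y z). split; [lra|].
      intros w Hw. apply HU. unfold ball in *.
      pose proof (Htr y z w). lra.
  - intro n. apply IH. intros de Hde. destruct (Hy de Hde) as [z [Hz Hz']].
    exists z. split; auto.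
Qed.

Lemma D_oadd_sub {X} (d : X -> X -> R) f e F zeta b :
  forall x, Dalpha d f e F (oadd zeta b) x -> Dalpha d f e F zeta x.
Proof.
  induction b as [|b IH|g IH]; simpl; intros x Hx.
  - auto.
  - apply IH. exact (proj1 Hx).
  - apply (IH 0%nat). apply Hx.
Qed.

Inductive reachOL : ord -> ord -> Prop :=
| r_refl a : reachOL a a
| r_L f n a : reachOL a (f n) -> reachOL a (OL f).

Lemma D_reach_oadd {X} (d : X -> X -> R) f e F zeta x alpha :
  Dalpha d f e F zeta x ->
  (forall b, reachOL (OS b) alpha -> Dalpha d f e F (oadd zeta (OS b)) x) ->
  Dalpha d f e F (oadd zeta alpha) x.
Proof.
  intros H0. induction alpha as [|b IH|g IH]; intros H.
  - exact H0.
  - apply H. constructor.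
  - simpl. intro n. apply IH. intros b Hb. apply H. econstructor. eauto.
Qed.

Lemma D_reach {X} (d : X -> X -> R) f e F x a b :
  reachOL a b -> Dalpha d f e F b x -> Dalpha d f e F a x.
Proof.
  induction 1; simpl; auto.
Qed.

Inductive imm : ord -> ord -> Prop :=
| imm_S b : imm b (OS b)
| imm_L f n : imm (f n) (OL f).

Lemma imm_wf : well_founded imm.
Proof.
  intro a. induction a as [|b IH|g IH]; constructor; intros y Hy; inversion Hy; subst; auto.
Qed.

Definition sub := clos_trans ord imm.

Lemma reach_sub a b : reachOL a b -> a = b \/ sub a b.
Proof.
  induction 1.
  - auto.
  - right. destruct IHreachOL as [->|Hs].
    + apply t_step. constructor.
    + eapply t_trans. exact Hs. apply t_step. constructor.
Qed.

Lemma reach_OS_sub b a : reachOL (OS b) a -> sub b a.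
Proof.
  intro H. destruct (reach_sub _ _ H) as [<-|Hs].
  - apply t_step. constructor.
  - eapply t_trans. apply t_step. constructor. exact Hs.
Qed.

Fixpoint diag (k : nat) : nat * nat :=
  match k with
  | O => (0%nat, 0%nat)
  | S k' => match diag k' with
            | (O, b) => (S b, 0%nat)
            | (S a, b) => (a, S b)
            end
  end.

Lemma diag_snd k : (snd (diag k) <= k)%nat.
Proof.
  induction k; simpl; [lia|].
  destruct (diag k) as [[|a] b]; simpl in *; lia.
Qed.

Lemma diag_shift c : forall k a b, diag k = (a + c, b)%nat -> diag (k + c) = (a, b + c)%nat.
Proof.
  induction c; intros k a b H.
  - rewrite !Nat.add_0_r. rewrite !Nat.add_0_r in H. exact H.
  - replace (a + S c)%nat with (S a + c)%nat in H by lia.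
    apply IHc in H. replace (k + S c)%nat with (S (k + c)) by lia.
    simpl. rewrite H. f_equal. lia.
Qed.

Lemma diag_n0 n : exists k, diag k = (n, 0%nat).
Proof.
  induction n.
  - exists 0%nat. reflexivity.
  - destruct IHn as [k Hk].
    assert (H := diag_shift n k 0 0). rewrite Nat.add_0_l in H. specialize (H Hk).
    exists (S (k + n)). simpl. rewrite H. reflexivity.
Qed.

Lemma diag_surj a b : exists k, diag k = (a, b).
Proof.
  destruct (diag_n0 (a + b)) as [k Hk].
  exists (k + b)%nat. apply diag_shift in Hk. exact Hk.
Qed.

Lemma reach_count alpha : exists e : nat -> option ord,
  (forall n b, e n = Some b -> reachOL (OS b) alpha) /\
  (forall b, reachOL (OS b) alpha -> exists n, e n = Some b).
Proof.
  induction alpha as [|b IH|g IH].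
  - exists (fun _ => None). split; [discriminate|].
    intros b Hb. inversion Hb.
  - exists (fun _ => Some b). split.
    + intros n c Hc. inversion Hc; subst. constructor.
    + intros c Hc. exists 0%nat. inversion Hc; subst. reflexivity.
  - assert (Hc : forall n, {e : nat -> option ord |
      (forall m c, e m = Some c -> reachOL (OS c) (g n)) /\
      (forall c, reachOL (OS c) (g n) -> exists m, e m = Some c)}).
    { intro n. apply constructive_indefinite_description. apply IH. }
    exists (fun k => proj1_sig (Hc (fst (diag k))) (snd (diag k))). split.
    + intros k c Hk. destruct (Hc (fst (diag k))) as [e [He1 He2]]; simpl in Hk.
      econstructor. eapply He1. eauto.
    + intros c Hr. inversion Hr; subst.
      destruct (Hc n) as [e [He1 He2]] eqn:Eq.
      destruct (He2 c H1) as [m Hm].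
      destruct (diag_surj n m) as [k Hk]. exists k. rewrite Hk. simpl. rewrite Eq. simpl. exact Hm.
Qed.

Record Lvl (X : Type) := mkLvl { lp : X; lq : X; lA : X -> Prop; lB : X -> Prop;
  lgA : X -> nat; lgB : X -> nat; lr : R }.
Arguments lp {X}. Arguments lq {X}. Arguments lA {X}. Arguments lB {X}.
Arguments lgA {X}. Arguments lgB {X}. Arguments lr {X}.

Definition piece_ok {X} (d : X -> X -> R) (h : X -> R) xi zeta (x : X) beta p
  (A : X -> Prop) (gA : X -> nat) : Prop :=
  (p = x -> forall z, ~ A z) /\
  (p <> x -> mclosed d A /\
     (forall y, Dalpha d (fun z => INR (gA z)) 1 A xi y -> gA y = 1%nat) /\
     gA p = 1%nat /\
     Dalpha d (fun z => INR (gA z) * h z) 1 A (oadd zeta beta) p).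

Definition spec {X} (d : X -> X -> R) (h : X -> R) xi zeta (x : X) rho beta (L : Lvl X) : Prop :=
  d x (lp L) < rho /\ d x (lq L) < rho /\ Rabs (h (lp L) - h (lq L)) >= 1 /\
  piece_ok d h xi zeta x beta (lp L) (lA L) (lgA L) /\
  piece_ok d h xi zeta x beta (lq L) (lB L) (lgB L) /\
  0 < lr L /\ lr L <= rho / 2 /\
  (forall z, lA L z -> 2 * lr L <= d x z /\ d x z < rho) /\
  (forall z, lB L z -> 2 * lr L <= d x z /\ d x z < rho) /\
  (forall z w, lA L z -> lB L w -> lr L <= d z w).

Fixpoint iter_rho (st : nat -> R -> R) (r0 : R) (k : nat) : R :=
  match k with O => r0 | S k => st k (iter_rho st r0 k) end.

Lemma build {X} (d : X -> X -> R) (Hm : is_metric d) h xi zeta (x : X) eps (Heps : eps > 0)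
  (B : nat -> ord)
  (Hstep : forall k rho, rho > 0 -> exists L, spec d h xi zeta x rho (B k) L) :
  exists (Q : X -> Prop) (g : X -> nat), mclosed d Q /\ (forall y, Q y -> ball d x eps y) /\
   (forall y, Dalpha d (fun z => INR (g z)) 1 Q xi y \/ y = x -> g y = 1%nat) /\
   Dalpha d (fun z => INR (g z) * h z) 1 Q zeta x /\
   (forall beta, (forall K, exists k, (K <= k)%nat /\ B k = beta) ->
      Dalpha d (fun z => INR (g z) * h z) 1 Q (oadd zeta (OS beta)) x).
Proof.
  pose proof Hm as (Hnn & H0 & Hsym & Htr).
  assert (Hs : forall k rho, {L | rho > 0 -> spec d h xi zeta x rho (B k) L}).
  { intros k rho. apply constructive_indefinite_description.
    destruct (Rlt_dec 0 rho) as [r|r].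
    - destruct (Hstep k rho r) as [L HL]; exists L; auto.
    - exists (mkLvl X x x (fun _ => False) (fun _ => False) (fun _ => 0%nat) (fun _ => 0%nat) 0).
      intro; lra. }
  set (st := fun k r => lr (proj1_sig (Hs k r))).
  set (rho := iter_rho st eps).
  set (Lk := fun k => proj1_sig (Hs k (rho k))).
  assert (HrS : forall k, rho (S k) = lr (Lk k)) by reflexivity.
  assert (Hpos : forall k, rho k > 0).
  { induction k. exact Heps. rewrite HrS.
    unfold Lk. destruct (Hs k (rho k)) as [L HL]; simpl. apply (HL IHk). }
  assert (HL : forall k, spec d h xi zeta x (rho k) (B k) (Lk k)).
  { intro k. unfold Lk. destruct (Hs k (rho k)) as [L HL]; simpl. apply (HL (Hpos k)). }
  assert (HLp : forall k, d x (lp (Lk k)) < rho k) by (intro k; destruct (HL k) as (a1&a2&a3&a4&a5&a6&a7&a8&a9&a10); assumption).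
  assert (HLq : forall k, d x (lq (Lk k)) < rho k) by (intro k; destruct (HL k) as (a1&a2&a3&a4&a5&a6&a7&a8&a9&a10); assumption).
  assert (HLh : forall k, Rabs (h (lp (Lk k)) - h (lq (Lk k))) >= 1) by (intro k; destruct (HL k) as (a1&a2&a3&a4&a5&a6&a7&a8&a9&a10); assumption).
  assert (HLoA : forall k, piece_ok d h xi zeta x (B k) (lp (Lk k)) (lA (Lk k)) (lgA (Lk k)))
    by (intro k; destruct (HL k) as (a1&a2&a3&a4&a5&a6&a7&a8&a9&a10); assumption).
  assert (HLoB : forall k, piece_ok d h xi zeta x (B k) (lq (Lk k)) (lB (Lk k)) (lgB (Lk k)))
    by (intro k; destruct (HL k) as (a1&a2&a3&a4&a5&a6&a7&a8&a9&a10); assumption).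
  assert (Hhalf : forall k, rho (S k) <= rho k / 2).
  { intro k. rewrite HrS. destruct (HL k) as (a1&a2&a3&a4&a5&a6&a7&a8&a9&a10); assumption. }
  assert (HLA : forall k z, lA (Lk k) z -> 2 * lr (Lk k) <= d x z /\ d x z < rho k)
    by (intro k; destruct (HL k) as (a1&a2&a3&a4&a5&a6&a7&a8&a9&a10); assumption).
  assert (HLB : forall k z, lB (Lk k) z -> 2 * lr (Lk k) <= d x z /\ d x z < rho k)
    by (intro k; destruct (HL k) as (a1&a2&a3&a4&a5&a6&a7&a8&a9&a10); assumption).
  assert (HLs : forall k z w, lA (Lk k) z -> lB (Lk k) w -> lr (Lk k) <= d z w)
    by (intro k; destruct (HL k) as (a1&a2&a3&a4&a5&a6&a7&a8&a9&a10); assumption).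
  assert (Hdec : forall k j, (k <= j)%nat -> rho j <= rho k).
  { intros k j Hkj. induction Hkj. lra. pose proof (Hhalf m). pose proof (Hpos m). lra. }
  assert (Hsmall : forall t, t > 0 -> exists K, rho K < t).
  { intros t Ht.
    assert (Hb : forall k, rho k <= eps * (/2)^k).
    { induction k. change (rho 0%nat) with eps. simpl. lra. pose proof (Hhalf k). rewrite <- tech_pow_Rmult.
      replace (eps * (/2 * (/2)^k)) with (eps * (/2)^k / 2) by field. lra. }
    destruct (pow_lt_1_zero (/2)) with (y := t / eps) as [N HN].
    { rewrite Rabs_pos_eq; lra. }
    { apply Rdiv_lt_0_compat; lra. }
    exists N. specialize (HN N (le_n _)). rewrite Rabs_pos_eq in HN.
    2:{ apply pow_le. lra. }
    pose proof (Hb N). apply Rmult_lt_compat_l with (r := eps) in HN; [|lra].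
    replace (eps * (t / eps)) with t in HN by (field; lra). lra. }
  set (Pc := fun k (b : bool) => if b then lA (Lk k) else lB (Lk k)).
  set (gP := fun k (b : bool) => if b then lgA (Lk k) else lgB (Lk k)).
  set (pt := fun k (b : bool) => if b then lp (Lk k) else lq (Lk k)).
  assert (HPc1 : forall k b z, Pc k b z -> 2 * rho (S k) <= d x z /\ d x z < rho k).
  { intros k b z Hz. rewrite HrS. destruct b; [apply HLA|apply HLB]; exact Hz. }
  assert (HPOK : forall k b, piece_ok d h xi zeta x (B k) (pt k b) (Pc k b) (gP k b)).
  { intros k b; destruct b; [apply HLoA|apply HLoB]. }
  assert (Hsep_lt : forall k j b c z w, (k < j)%nat -> Pc k b z -> Pc j c w -> rho (S k) < d z w).
  { intros k j b c z w Hkj Hz Hw. apply HPc1 in Hz. apply HPc1 in Hw.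
    pose proof (Hdec (S k) j Hkj). pose proof (Htr x w z). rewrite (Hsym w z) in *.
    pose proof (Hpos (S k)). lra. }
  assert (Hsep_eq : forall k b c z w, b <> c -> Pc k b z -> Pc k c w -> rho (S k) <= d z w).
  { intros k b c z w Hbc Hz Hw. rewrite HrS.
    destruct b, c; try congruence.
    - apply HLs; auto.
    - rewrite Hsym. apply HLs; auto. }
  assert (Hsep : forall k j b c z w, (k, b) <> (j, c) -> Pc k b z -> Pc j c w ->
            rho (S (Nat.min k j)) <= d z w).
  { intros k j b c z w Hne Hz Hw.
    destruct (Compare_dec.lt_eq_lt_dec k j) as [[Hlt|Heq]|Hgt].
    - rewrite Nat.min_l by lia. left. eauto.
    - subst j. rewrite Nat.min_id. apply (Hsep_eq k b c); auto. congruence.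
    - rewrite Nat.min_r by lia. rewrite Hsym. left. eauto. }
  assert (Huniq : forall k j b c z, Pc k b z -> Pc j c z -> k = j /\ b = c).
  { intros k j b c z Hz Hz'. destruct (classic ((k, b) = (j, c))) as [E|E].
    - inversion E; auto.
    - exfalso. pose proof (Hsep _ _ _ _ _ _ E Hz Hz').
      pose proof (proj2 (H0 z z) eq_refl). pose proof (Hpos (S (Nat.min k j))). lra. }
  assert (HnotX : forall k b, ~ Pc k b x).
  { intros k b Hx. apply HPc1 in Hx. pose proof (proj2 (H0 x x) eq_refl).
    pose proof (Hpos (S k)). lra. }
  assert (Hg' : forall z, {n : nat | (z = x -> n = 1%nat) /\
                          forall k b, Pc k b z -> n = gP k b z}).
  { intro z. apply constructive_indefinite_description.
    destruct (classic (exists k b, Pc k b z)) as [[k [b Hkb]]|Hno].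
    - exists (gP k b z). split.
      + intro; subst; exfalso; eapply HnotX; eauto.
      + intros j c Hjc. destruct (Huniq _ _ _ _ _ Hkb Hjc). subst; reflexivity.
    - exists 1%nat. split; auto. intros k b Hkb. exfalso; eauto. }
  set (g := fun z => proj1_sig (Hg' z)).
  assert (Hgx : g x = 1%nat).
  { exact (proj1 (proj2_sig (Hg' x)) eq_refl). }
  assert (HgP : forall k b z, Pc k b z -> g z = gP k b z).
  { intros k b z Hz. exact (proj2 (proj2_sig (Hg' z)) k b Hz). }
  set (Q := fun z => z = x \/ exists k b, Pc k b z).
  exists Q, g.
  assert (Hloc : forall k b y, Pc k b y -> exists delta, delta > 0 /\
             forall w, Q w -> d y w < delta -> Pc k b w).
  { intros k b y Hy. pose proof (HPc1 _ _ _ Hy) as Hy1.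
    pose proof (Hpos (S k)).
    exists (Rmin (d x y) (rho (S k))). split. apply Rmin_glb_lt; lra.
    intros w [Hw|[j [c Hw]]] Hdw.
    - subst w. rewrite Hsym in Hdw. pose proof (Rmin_l (d x y) (rho (S k))). lra.
    - destruct (classic ((k, b) = (j, c))) as [E|E].
      + inversion E; subst; auto.
      + pose proof (Hsep _ _ _ _ _ _ E Hy Hw).
        pose proof (Hdec (S (Nat.min k j)) (S k) ltac:(lia)).
        pose proof (Rmin_r (d x y) (rho (S k))). lra. }
  assert (Hclosed : mclosed d Q).
  { intros z Hz. destruct (classic (z = x)) as [E|E]; [left; auto|right].
    assert (Ht : d x z > 0).
    { destruct (Hnn x z) as [?|E']; auto. exfalso. apply E. symmetry. apply H0. auto. }
    set (t := d x z) in *.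
    destruct (Hsmall (t/2)) as [K HK]; [lra|].
    pose proof (Hpos K).
    assert (Hfar : forall j c w, Pc j c w -> (K <= j)%nat -> d z w > t / 2).
    { intros j c w Hw Hj. apply HPc1 in Hw. pose proof (Hdec K j Hj).
      pose proof (Htr x w z). rewrite (Hsym w z) in *. unfold t in *. lra. }
    set (de := Rmin (t/2) (rho K / 2)).
    assert (Hde : de > 0) by (apply Rmin_glb_lt; lra).
    assert (Hde1 : de <= t/2) by apply Rmin_l.
    assert (Hde2 : de <= rho K / 2) by apply Rmin_r.
    destruct (Hz de Hde) as [y0 [Hy0 Hzy0]].
    destruct Hy0 as [Ey0|[k0 [b0 Hy0]]].
    { subst y0. rewrite Hsym in Hzy0. unfold t in *. lra. }
    assert (Hk0 : (k0 < K)%nat).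
    { destruct (Compare_dec.le_lt_dec K k0) as [Hle|]; auto. pose proof (Hfar _ _ _ Hy0 Hle). lra. }
    exists k0, b0.
    destruct (HPOK k0 b0) as [Hp1 Hp2].
    destruct (classic (pt k0 b0 = x)) as [Ep|Ep].
    { exfalso. eapply Hp1; eauto. }
    destruct (Hp2 Ep) as [Hcl _].
    apply Hcl. intros de' Hde'.
    destruct (Hz (Rmin de' de)) as [y [Hy Hzy]]. apply Rmin_glb_lt; lra.
    pose proof (Rmin_l de' de). pose proof (Rmin_r de' de).
    destruct Hy as [Ey|[j [c Hy]]].
    { subst y. rewrite Hsym in Hzy. unfold t in *. lra. }
    assert (Hj : (j < K)%nat).
    { destruct (Compare_dec.le_lt_dec K j) as [Hle|]; auto. pose proof (Hfar _ _ _ Hy Hle). lra. }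
    destruct (classic ((k0, b0) = (j, c))) as [E'|E'].
    - inversion E'; subst. exists y; split; auto. lra.
    - exfalso. pose proof (Hsep _ _ _ _ _ _ E' Hy0 Hy).
      pose proof (Hdec (S (Nat.min k0 j)) K ltac:(lia)).
      pose proof (Htr y0 z y). rewrite (Hsym y0 z) in *. lra. }
  assert (Hpt : forall k b, pt k b <> x ->
     Dalpha d (fun z => INR (g z) * h z) 1 Q (oadd zeta (B k)) (pt k b) /\ g (pt k b) = 1%nat).
  { intros k b Hne. destruct (HPOK k b) as [_ Hp2]. destruct (Hp2 Hne) as (Hcl & Hgc & Hg1 & HD).
    assert (Hin : Pc k b (pt k b)) by (eapply D_sub; eauto).
    split.
    - eapply D_mono with (F := Pc k b).
      { intros z Hz. right. eauto. }
      eapply D_ext; [|exact HD].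
      intros z Hz. simpl. rewrite (HgP k b z Hz). reflexivity.
    - rewrite (HgP k b _ Hin). exact Hg1. }
  assert (Hlev : forall k, exists b, pt k b <> x).
  { intro k. destruct (classic (pt k true = x)) as [E1|E1]; [|eauto].
    destruct (classic (pt k false = x)) as [E2|E2]; [|eauto].
    exfalso. pose proof (HLh k) as Hh. simpl in E1, E2.
    rewrite E1, E2 in Hh. rewrite Rminus_diag, Rabs_R0 in Hh. lra. }
  split; [exact Hclosed|].
  split.
  { intros y [Ey|[k [b Hy]]]; unfold ball.
    - subst. rewrite (proj2 (H0 x x) eq_refl). exact Heps.
    - apply HPc1 in Hy. pose proof (Hdec 0%nat k ltac:(lia)). change (rho 0%nat) with eps in H. lra. }
  split.
  { intros y [Hy|Ey]; [|subst; exact Hgx].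
    destruct (classic (y = x)) as [Ey|Ey]; [subst; exact Hgx|].
    pose proof (D_sub _ _ _ _ _ _ Hy) as [Ey'|[k [b Hyk]]]; [congruence|].
    destruct (HPOK k b) as [Hp1 Hp2].
    destruct (classic (pt k b = x)) as [Ep|Ep]; [exfalso; eapply Hp1; eauto|].
    destruct (Hp2 Ep) as (Hcl & Hgc & Hg1 & HD).
    rewrite (HgP k b y Hyk). apply Hgc.
    eapply D_ext with (f := fun z => INR (g z)).
    { intros z Hz. rewrite (HgP k b z Hz). reflexivity. }
    apply (D_local d Hm _ _ Q (Pc k b));
      [intros z Hz; right; eauto | intros y' Hy'; apply (Hloc k b y' Hy') | exact Hyk | exact Hy]. }
  split.
  { apply D_closure; auto. intros de Hde. destruct (Hsmall de Hde) as [K HK].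
    destruct (Hlev K) as [b Hb]. exists (pt K b). split.
    - eapply D_oadd_sub. apply (Hpt K b Hb).
    - assert (d x (pt K b) < rho K) by (destruct b; [apply HLp|apply HLq]). lra. }
  intros beta Hinf.
  assert (HDb : Dalpha d (fun z => INR (g z) * h z) 1 Q (oadd zeta beta) x).
  { apply D_closure; auto. intros de Hde. destruct (Hsmall de Hde) as [K HK].
    destruct (Hinf K) as [k [Hk Hbk]].
    destruct (Hlev k) as [b Hb]. exists (pt k b). split.
    - rewrite <- Hbk. apply (Hpt k b Hb).
    - assert (d x (pt k b) < rho k) by (destruct b; [apply HLp|apply HLq]).
      pose proof (Hdec K k Hk). lra. }
  assert (Hany : forall k b, B k = beta ->
     Dalpha d (fun z => INR (g z) * h z) 1 Q (oadd zeta beta) (pt k b) /\ g (pt k b) = 1%nat).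
  { intros k b Hbk. destruct (classic (pt k b = x)) as [E|E].
    - rewrite E. auto.
    - rewrite <- Hbk. apply Hpt; auto. }
  simpl. split; [exact HDb|].
  intros U [de [Hde HU]].
  destruct (Hsmall de Hde) as [K HK].
  destruct (Hinf K) as [k [Hk Hbk]].
  pose proof (Hdec K k Hk).
  destruct (Hany k true Hbk) as [A1 G1]. destruct (Hany k false Hbk) as [A2 G2].
  pose proof (HLp k) as D1'. pose proof (HLq k) as D2'. pose proof (HLh k) as Hh.
  exists (pt k true), (pt k false). simpl in *.
  repeat split; auto.
  - apply HU. unfold ball. lra.
  - apply HU. unfold ball. lra.
  - rewrite G1, G2. simpl. rewrite !Rmult_1_l. exact Hh.
Qed.

Lemma dpos {X} (d : X -> X -> R) (Hm : is_metric d) a b : a <> b -> d a b > 0.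
Proof.
  destruct Hm as (Hnn & H0 & _). intro Hab. destruct (Hnn a b) as [?|E]; auto.
  exfalso. apply Hab. apply H0. auto.
Qed.

Lemma main {X} (d : X -> X -> R) (Hm : is_metric d) h xi zeta (P : X -> Prop)
  (Hprop : has_property d h P xi zeta) :
  forall alpha, has_property d h (Dalpha d h 1 P alpha) xi (oadd zeta alpha).
Proof.
  pose proof Hm as (Hnn & H0 & Hsym & Htr).
  intro alpha. induction alpha as [alpha IH] using (well_founded_induction (wf_clos_trans _ _ imm_wf)).
  intros x Hx eps Heps.
  destruct (classic (exists b, reachOL (OS b) alpha)) as [[b0 Hb0]|Hno].
  2:{ destruct (Hprop x (D_sub _ _ _ _ _ _ Hx) eps Heps) as (Q & g & H1 & H2 & H3 & H4).
      exists Q, g. repeat split; auto. apply D_reach_oadd; auto. intros b Hb; exfalso; eauto. }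
  destruct (reach_count alpha) as [e [He1 He2]].
  set (E := fun n => match e n with Some b => b | None => b0 end).
  assert (HE : forall n, reachOL (OS (E n)) alpha).
  { intro n; unfold E; destruct (e n) eqn:Eq; eauto. }
  set (Bk := fun k => E (fst (diag k))).
  destruct (build d Hm h xi zeta x eps Heps Bk) as (Q & g & H1 & H2 & H3 & H4 & H5).
  2:{ exists Q, g. repeat split; auto. apply D_reach_oadd; auto. intros b Hb. apply H5.
      intros K. destruct (He2 b Hb) as [n Hn]. destruct (diag_surj n K) as [k Hk]. exists k. split.
      - pose proof (diag_snd k) as Hs. rewrite Hk in Hs. simpl in Hs. lia.
      - unfold Bk, E. rewrite Hk; simpl; rewrite Hn; reflexivity. }
  intros k rho Hrho. set (beta := Bk k).
  assert (Hr : reachOL (OS beta) alpha) by apply HE.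
  assert (HxD : Dalpha d h 1 P (OS beta) x) by (eapply D_reach; eauto).
  destruct HxD as [_ HD1].
  destruct (HD1 (ball d x rho)) as (p & q & Hp & Hpb & Hq & Hqb & Hh).
  { exists rho; split; auto. }
  unfold ball in Hpb, Hqb.
  assert (Hpq : p <> q).
  { intro E'; subst. rewrite Rminus_diag, Rabs_R0 in Hh; lra. }
  pose proof (dpos d Hm p q Hpq) as Hdpq.
  assert (Hmk : forall y, Dalpha d h 1 P beta y -> forall c, (y <> x -> c > 0) ->
            exists A gA, piece_ok d h xi zeta x beta y A gA /\ forall z, A z -> d y z < c).
  { intros y Hy c Hc. destruct (classic (y = x)) as [E'|E'].
    - exists (fun _ => False), (fun _ => 1%nat). split; [split|]; try tauto.
    - destruct (IH beta (reach_OS_sub _ _ Hr) y Hy c (Hc E')) as (A & gA & A1 & A2 & A3 & A4).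
      exists A, gA. split; [split|].
      + intro; contradiction.
      + intros _. split; [exact A1|]. split; [intros y' Hy'; apply A3; left; exact Hy'|].
        split; [apply A3; right; reflexivity|exact A4].
      + intros z Hz; apply A2; auto. }
  set (cp := Rmin (d x p / 2) (Rmin (rho - d x p) (d p q / 3))).
  set (cq := Rmin (d x q / 2) (Rmin (rho - d x q) (d p q / 3))).
  assert (Hcp : p <> x -> cp > 0).
  { intro Hne. pose proof (dpos d Hm x p ltac:(congruence)).
    unfold cp. repeat apply Rmin_glb_lt; lra. }
  assert (Hcq : q <> x -> cq > 0).
  { intro Hne. pose proof (dpos d Hm x q ltac:(congruence)).
    unfold cq. repeat apply Rmin_glb_lt; lra. }
  assert (Hcp1 : cp <= d x p / 2) by apply Rmin_l.
  assert (Hcp2 : cp <= rho - d x p) by (unfold cp; eapply Rle_trans; [apply Rmin_r|apply Rmin_l]).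
  assert (Hcp3 : cp <= d p q / 3) by (unfold cp; eapply Rle_trans; [apply Rmin_r|apply Rmin_r]).
  assert (Hcq1 : cq <= d x q / 2) by apply Rmin_l.
  assert (Hcq2 : cq <= rho - d x q) by (unfold cq; eapply Rle_trans; [apply Rmin_r|apply Rmin_l]).
  assert (Hcq3 : cq <= d p q / 3) by (unfold cq; eapply Rle_trans; [apply Rmin_r|apply Rmin_r]).
  clearbody cp cq.
  destruct (Hmk p Hp cp Hcp) as (A & gA & HA & HAc).
  destruct (Hmk q Hq cq Hcq) as (B & gB & HB & HBc).
  assert (Ht : forall y, exists t, t > 0 /\ (y <> x -> t <= d x y / 4)).
  { intro y. destruct (classic (y = x)) as [E'|E'].
    - exists 1. split; [lra|]. intro; contradiction.
    - exists (d x y / 4). pose proof (dpos d Hm x y ltac:(congruence)). split; lra. }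
  destruct (Ht p) as [tp [Htp Htp']]. destruct (Ht q) as [tq [Htq Htq']].
  set (lr0 := Rmin (Rmin (rho/2) (d p q / 3)) (Rmin tp tq)).
  assert (Hl1 : lr0 <= rho / 2) by (unfold lr0; pose proof (Rmin_l (Rmin (rho/2) (d p q / 3)) (Rmin tp tq)); pose proof (Rmin_l (rho/2) (d p q / 3)); lra).
  assert (Hl2 : lr0 <= d p q / 3) by (unfold lr0; pose proof (Rmin_l (Rmin (rho/2) (d p q / 3)) (Rmin tp tq)); pose proof (Rmin_r (rho/2) (d p q / 3)); lra).
  assert (Hl3 : lr0 <= tp) by (unfold lr0; pose proof (Rmin_r (Rmin (rho/2) (d p q / 3)) (Rmin tp tq)); pose proof (Rmin_l tp tq); lra).
  assert (Hl4 : lr0 <= tq) by (unfold lr0; pose proof (Rmin_r (Rmin (rho/2) (d p q / 3)) (Rmin tp tq)); pose proof (Rmin_r tp tq); lra).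
  assert (Hl0 : 0 < lr0) by (unfold lr0; repeat apply Rmin_glb_lt; lra).
  assert (HAx : forall z, A z -> p <> x) by (intros z Hz E'; exact (proj1 HA E' z Hz)).
  assert (HBx : forall z, B z -> q <> x) by (intros z Hz E'; exact (proj1 HB E' z Hz)).
  exists (mkLvl X p q A B gA gB lr0).
  unfold spec; simpl.
  refine (conj Hpb (conj Hqb (conj Hh (conj HA (conj HB (conj Hl0 (conj Hl1 (conj _ (conj _ _))))))))).
  - intros z Hz. pose proof (HAx z Hz) as Hne. specialize (HAc z Hz). specialize (Htp' Hne).
    pose proof (Htr x p z).
    pose proof (Htr x z p). rewrite (Hsym z p) in *.  split; lra.
  - intros z Hz. pose proof (HBx z Hz) as Hne. specialize (HBc z Hz). specialize (Htq' Hne).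
    pose proof (Htr x q z).
    pose proof (Htr x z q). rewrite (Hsym z q) in *.  split; lra.
  - intros z w Hz Hw. specialize (HAc z Hz). specialize (HBc w Hw).
    pose proof (Htr p z q). pose proof (Htr z w q). rewrite (Hsym w q) in *.
    lra.
Qed.

Theorem proposition4p15 (X : Type) (d : X -> X -> R) (Hd : polish_metric d)
  (h : X -> R) (alpha xi zeta : ord) (P : X -> Prop)
  (HP : mclosed d P) (Hprop : has_property d h P xi zeta) :
  has_property d h (Dalpha d h 1 P alpha) xi (oadd zeta alpha).
Proof.
  exact (main d (proj1 Hd) h xi zeta P Hprop alpha).
Qed.
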